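(* Let $q\in\mathrm{prob}(\{0,1\}^2)$. The set $A:=\{(\pi_1,\chi^{(1)}_{0|0},\chi^{(1)}_{1|1},\chi^{(2)}_{0|0},\chi^{(2)}_{1|1}):(\pi,\chi)\in\Theta_2,\ \mu(\pi,\chi)=q\}$ is nonempty and equals the set of all $(\mathrm{Pr},\mathrm{Sp}_1,\mathrm{Se}_1,\mathrm{Sp}_2,\mathrm{Se}_2)\in[0,1]^5$ satisfying (a) $(1-\mathrm{Pr})(1-\mathrm{Sp}_1)+\mathrm{Pr}\,\mathrm{Se}_1=q_{1+}$, (b) $(1-\mathrm{Pr})(1-\mathrm{Sp}_2)+\mathrm{Pr}\,\mathrm{Se}_2=q_{+1}$, (c) $(1-\mathrm{Pr})\min\{\mathrm{Sp}_1,\mathrm{Sp}_2\}+\mathrm{Pr}\,(1-\max\{\mathrm{Se}_1,\mathrm{Se}_2\})\ge q_{00}$, (d) $(1-\mathrm{Pr})(\mathrm{Sp}_1+\mathrm{Sp}_2-1)^++\mathrm{Pr}\,(1-\mathrm{Se}_1-\mathrm{Se}_2)^+\le q_{00}$; equivalently, the set of all such quintuples in $[0,1]^5$ satisfying (e) $\mathrm{Pr}(\mathrm{Se}_2-\mathrm{Se}_1)=(1-\mathrm{Pr})(\mathrm{Sp}_2-\mathrm{Sp}_1)+q_{01}-q_{10}$, (f) $\mathrm{Pr}(\mathrm{Se}_1+\mathrm{Se}_2-1)=(1-\mathrm{Pr})(\mathrm{Sp}_1+\mathrm{Sp}_2-1)+q_{11}-q_{00}$, (g) $-q_{10}\le\mathrm{Pr}(\mathrm{Se}_2-\mathrm{Se}_1)\le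 q_{01}$, (h) $-q_{00}\le\mathrm{Pr}(\mathrm{Se}_1+\mathrm{Se}_2-1)\le q_{11}$.
   Context: $x^+:=\max\{x,0\}$. A subscript $+$ denotes summation over the replaced index, e.g. $q_{1+}=q_{10}+q_{11}$, $q_{+1}=q_{01}+q_{11}$. $\mathrm{prob}(\mathcal{X})$ is the set of probability densities on a finite set $\mathcal{X}$; $\mathrm{markov}(\mathcal{X},\mathcal{Y})$ the set of maps $(x,y)\mapsto p_{y|x}$ with $p_{\cdot|x}\in\mathrm{prob}(\mathcal{Y})$. $\Theta_2:=\mathrm{prob}(\{0,1\})\times\mathrm{markov}(\{0,1\},\{0,1\}^2)$, $\mu(\pi,\chi)_j:=\sum_{i=0}^1\pi_i\chi_{j|i}$ for $j\in\{0,1\}^2$, $\chi^{(1)}_{\iota|i}:=\chi_{\iota0|i}+\chi_{\iota1|i}$, $\chi^{(2)}_{\iota|i}:=\chi_{0\iota|i}+\chi_{1\iota|i}$. *)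

(* Defs.v *)
(* R : realFieldType. Index 0 = false, 1 = true. *)
From HB Require Import structures.
From mathcomp Require Import all_boot all_order all_algebra.
Set Implicit Arguments. Unset Strict Implicit. Unset Printing Implicit Defensive.
Import Order.TTheory GRing.Theory Num.Theory.
Local Open Scope ring_scope.

Definition is_prob (R : realFieldType) (X : finType) (p : X -> R) : Prop :=
  (forall x, 0 <= p x) /\ \sum_(x : X) p x = 1.

Definition is_markov (R : realFieldType) (X Y : finType) (p : X -> Y -> R) : Prop :=
  forall x, is_prob (p x).

Definition pos_part (R : realFieldType) (x : R) : R := Num.max x 0.

Definition mu (R : realFieldType) (pi : bool -> R) (chi : bool -> bool * bool -> R)
  (j : bool * bool) : R := \sum_(i : bool) pi i * chi i j.

Definition chi1 (R : realFieldType) (chi : bool -> bool * bool -> R) (iota i : bool) : R :=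
  chi i (iota, false) + chi i (iota, true).
Definition chi2 (R : realFieldType) (chi : bool -> bool * bool -> R) (iota i : bool) : R :=
  chi i (false, iota) + chi i (true, iota).

Definition inA (R : realFieldType) (q : bool * bool -> R) (Pr Sp1 Se1 Sp2 Se2 : R) : Prop :=
  exists (pi : bool -> R) (chi : bool -> bool * bool -> R),
    is_prob pi /\ is_markov chi /\ (forall j, mu pi chi j = q j) /\
    Pr = pi true /\ Sp1 = chi1 chi false false /\ Se1 = chi1 chi true true /\
    Sp2 = chi2 chi false false /\ Se2 = chi2 chi true true.

Definition in01 (R : realFieldType) (x : R) : Prop := 0 <= x <= 1.

(* Main.v *)
Require Import Defs.
From HB Require Import structures.
From mathcomp Require Import all_boot all_order all_algebra.
From mathcomp Require Import ring lra.
Import Order.TTheory GRing.Theory Num.Theory.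
Local Open Scope ring_scope.

Section Aux.
Variable R : realFieldType.

Lemma minF (x y : R) :
  Num.min x y <= x /\ Num.min x y <= y /\ (Num.min x y = x \/ Num.min x y = y).
Proof. case: (leP x y) => h; split; lra. Qed.

Lemma maxF (x y : R) :
  x <= Num.max x y /\ y <= Num.max x y /\ (Num.max x y = x \/ Num.max x y = y).
Proof. case: (leP x y) => h; split; lra. Qed.

Lemma posF (x : R) : x <= pos_part x /\ 0 <= pos_part x /\ (pos_part x = x \/ pos_part x = 0).
Proof. rewrite /pos_part; case: (leP x 0) => h; split; lra. Qed.

Lemma sum4 (f : bool * bool -> R) :
  \sum_x f x = f (false,false) + f (false,true) + f (true,false) + f (true,true).
Proof.
rewrite (eq_bigr (fun p => f (p.1, p.2))); last by case.
rewrite -(pair_bigA _ (fun i j => f (i, j))) /= !big_bool /=; lra.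
Qed.

Lemma exists_lam (L U x : R) : L <= x -> x <= U ->
  exists l, 0 <= l /\ l <= 1 /\ L + l * (U - L) = x.
Proof.
move=> h1 h2; case: (eqVneq U L) => [eUL|hne].
  exists 0; split; first by [].  split; first by []. rewrite eUL in h2; lra.
have hp : 0 < U - L by rewrite subr_gt0 lt_neqAle eq_sym hne /=; apply: le_trans h2.
exists ((x - L) / (U - L)); split; first by apply: divr_ge0; lra.
split; first by rewrite ler_pdivrMr //; lra.
rewrite divfK; first lra. by rewrite gt_eqF.
Qed.

Lemma L1 (q : bool * bool -> R) P Sp1 Se1 Sp2 Se2 :
  inA q P Sp1 Se1 Sp2 Se2 ->
  [/\ in01 P, in01 Sp1, in01 Se1, in01 Sp2 & in01 Se2] /\
  [/\ P * (Se2 - Se1) = (1 - P) * (Sp2 - Sp1) + q (false,true) - q (true,false),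
      P * (Se1 + Se2 - 1) = (1 - P) * (Sp1 + Sp2 - 1) + q (true,true) - q (false,false),
      - q (true,false) <= P * (Se2 - Se1) <= q (false,true) &
      - q (false,false) <= P * (Se1 + Se2 - 1) <= q (true,true)].
Proof.
move=> [pi [chi [[hp0 hps] [hchi [hmu [-> [-> [-> [-> ->]]]]]]]]].
rewrite /chi1 /chi2 /in01.
rewrite big_bool /= in hps.
have e0 : pi false = 1 - pi true by lra.
have hm : forall j, q j = pi true * chi true j + (1 - pi true) * chi false j.
  by move=> j; rewrite -hmu /mu big_bool /= e0.
rewrite !hm.
have [hx0 hxs] := hchi true. have [hy0 hys] := hchi false.
rewrite sum4 in hxs. rewrite sum4 in hys.
have p1 := hp0 true. have p0 := hp0 false. rewrite e0 in p0.
move: (hx0 (false,false)) (hx0 (false,true)) (hx0 (true,false)) (hx0 (true,true))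
      (hy0 (false,false)) (hy0 (false,true)) (hy0 (true,false)) (hy0 (true,true)).
move: hxs hys p1 p0.
set x00 := chi true (false,false). set x01 := chi true (false,true).
set x10 := chi true (true,false). set x11 := chi true (true,true).
set y00 := chi false (false,false). set y01 := chi false (false,true).
set y10 := chi false (true,false). set y11 := chi false (true,true).
set p := pi true.
clearbody x00 x01 x10 x11 y00 y01 y10 y11 p.
move=> hxs hys p1 p0 a00 a01 a10 a11 b00 b01 b10 b11.
have m1 := mulr_ge0 p1 a00. have m2 := mulr_ge0 p1 a01.
have m3 := mulr_ge0 p1 a10. have m4 := mulr_ge0 p1 a11.
have n1 := mulr_ge0 p0 b00. have n2 := mulr_ge0 p0 b01.
have n3 := mulr_ge0 p0 b10. have n4 := mulr_ge0 p0 b11.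
have sx : p * (x00 + x01 + x10 + x11) = p * 1 by rewrite hxs.
have sy : (1 - p) * (y00 + y01 + y10 + y11) = (1 - p) * 1 by rewrite hys.
split; first by split; apply/andP; split; lra.
split; try (apply/andP; split); lra.
Qed.

Lemma L3 (q : bool * bool -> R) P Sp1 Se1 Sp2 Se2 :
  q (false,false) + q (false,true) + q (true,false) + q (true,true) = 1 ->
  (forall j, 0 <= q j) ->
  [/\ in01 P, in01 Sp1, in01 Se1, in01 Sp2 & in01 Se2] ->
  ([/\ (1 - P) * (1 - Sp1) + P * Se1 = q (true,false) + q (true,true),
       (1 - P) * (1 - Sp2) + P * Se2 = q (false,true) + q (true,true),
       (1 - P) * Num.min Sp1 Sp2 + P * (1 - Num.max Se1 Se2) >= q (false,false) &
       (1 - P) * pos_part (Sp1 + Sp2 - 1) + P * pos_part (1 - Se1 - Se2) <= q (false,false)]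
  <->
  [/\ P * (Se2 - Se1) = (1 - P) * (Sp2 - Sp1) + q (false,true) - q (true,false),
      P * (Se1 + Se2 - 1) = (1 - P) * (Sp1 + Sp2 - 1) + q (true,true) - q (false,false),
      - q (true,false) <= P * (Se2 - Se1) <= q (false,true) &
      - q (false,false) <= P * (Se1 + Se2 - 1) <= q (true,true)]).
Proof.
move=> hs hq0 [/andP[P0 P1] /andP[a0 a1] /andP[b0 b1] /andP[c0 c1] /andP[d0 d1]].
move: hs (hq0 (false,false)) (hq0 (false,true)) (hq0 (true,false)) (hq0 (true,true)).
set q00 := q (false,false). set q01 := q (false,true).
set q10 := q (true,false). set q11 := q (true,true).
clearbody q00 q01 q10 q11 => hs g00 g01 g10 g11.
have [m1 [m2 m3]] := minF Sp1 Sp2.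
have [M1 [M2 M3]] := maxF Se1 Se2.
have [x1 [x2 x3]] := posF (Sp1 + Sp2 - 1).
have [y1 [y2 y3]] := posF (1 - Se1 - Se2).
have hP' : 0 <= 1 - P by lra.
have f1 := ler_wpM2l hP' m1. have f2 := ler_wpM2l hP' m2.
have f3 := ler_wpM2l P0 M1. have f4 := ler_wpM2l P0 M2.
have f5 := ler_wpM2l hP' x1. have f6 := mulr_ge0 hP' x2.
have f7 := ler_wpM2l P0 y1. have f8 := mulr_ge0 P0 y2.
move: m1 m2 m3 M1 M2 M3 x1 x2 x3 y1 y2 y3 f1 f2 f3 f4 f5 f6 f7 f8.
set m := Num.min Sp1 Sp2. set M := Num.max Se1 Se2.
set x := pos_part (Sp1 + Sp2 - 1). set y := pos_part (1 - Se1 - Se2).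
clearbody m M x y.
move=> m1 m2 m3 M1 M2 M3 x1 x2 x3 y1 y2 y3 f1 f2 f3 f4 f5 f6 f7 f8.
split.
  move=> [h1 h2 h3 h4]; split; try (apply/andP; split); lra.
move=> [h1 h2 /andP[h3 h3'] /andP[h4 h4']]; split; try lra.
  by clear -h1 h2 h3 h3' h4 h4' m3 M3 hs P0 P1 g00 g01 g10 g11;
     case: m3 => ?; subst m; case: M3 => ?; subst M; lra.
by clear -h1 h2 h3 h3' h4 h4' x3 y3 hs P0 P1 g00 g01 g10 g11;
   case: x3 => ?; subst x; case: y3 => ?; subst y; lra.
Qed.

Lemma L2 (q : bool * bool -> R) P Sp1 Se1 Sp2 Se2 :
  q (false,false) + q (false,true) + q (true,false) + q (true,true) = 1 ->
  [/\ in01 P, in01 Sp1, in01 Se1, in01 Sp2 & in01 Se2] ->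
  [/\ (1 - P) * (1 - Sp1) + P * Se1 = q (true,false) + q (true,true),
       (1 - P) * (1 - Sp2) + P * Se2 = q (false,true) + q (true,true),
       (1 - P) * Num.min Sp1 Sp2 + P * (1 - Num.max Se1 Se2) >= q (false,false) &
       (1 - P) * pos_part (Sp1 + Sp2 - 1) + P * pos_part (1 - Se1 - Se2) <= q (false,false)] ->
  inA q P Sp1 Se1 Sp2 Se2.
Proof.
move=> hs [/andP[P0 P1] /andP[a0 a1] /andP[b0 b1] /andP[c0 c1] /andP[d0 d1]].
move=> [ha hb hc hd].
have [m1 [m2 m3]] := minF Sp1 Sp2.
have [M1 [M2 M3]] := maxF Se1 Se2.
have [x1 [x2 x3]] := posF (Sp1 + Sp2 - 1).
have [y1 [y2 y3]] := posF (1 - Se1 - Se2).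
move: hc hd m1 m2 m3 M1 M2 M3 x1 x2 x3 y1 y2 y3.
set m := Num.min Sp1 Sp2. set M := Num.max Se1 Se2.
set x := pos_part (Sp1 + Sp2 - 1). set y := pos_part (1 - Se1 - Se2).
clearbody m M x y.
move=> hc hd m1 m2 m3 M1 M2 M3 x1 x2 x3 y1 y2 y3.
have xm : x <= m by case: m3 => ->; case: x3 => ->; lra.
have yM : y <= 1 - M by case: M3 => ->; case: y3 => ->; lra.
have [l [l0 [l1 hl]]] := exists_lam _ _ _ hd hc.
set r := x + l * (m - x). set s := y + l * ((1 - M) - y).
have r1 : 0 <= l * (m - x) by apply: mulr_ge0; lra.
have r2 : 0 <= (1 - l) * (m - x) by apply: mulr_ge0; lra.
have s1 : 0 <= l * ((1 - M) - y) by apply: mulr_ge0; lra.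
have s2 : 0 <= (1 - l) * ((1 - M) - y) by apply: mulr_ge0; lra.
have heq : (1 - P) * r + P * s = q (false,false) by rewrite /r /s -hl; ring.
have rlo : x <= r by rewrite /r; lra.
have rhi : r <= m by rewrite /r; lra.
have slo : y <= s by rewrite /s; lra.
have shi : s <= 1 - M by rewrite /s; lra.
clearbody r s.
pose pi := fun b : bool => if b then P else 1 - P.
pose chi := fun (b : bool) (j : bool * bool) =>
  let: (j1, j2) := j in
  if b then (if j1 then (if j2 then Se1 + Se2 - 1 + s else 1 - Se2 - s)
             else (if j2 then 1 - Se1 - s else s))
  else (if j1 then (if j2 then 1 - Sp1 - Sp2 + r else Sp2 - r)
        else (if j2 then Sp1 - r else r)).
exists pi, chi.
split.
  split; first by case => /=; lra.
  by rewrite big_bool /=; lra.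
split.
  case; split.
  - by case=> [[] []] /=; lra.
  - by rewrite sum4 /=; lra.
  - by case=> [[] []] /=; lra.
  - by rewrite sum4 /=; lra.
split.
  case=> [[] []]; rewrite /mu big_bool /=; lra.
by rewrite /chi1 /chi2 /=; do !split; ring.
Qed.

End Aux.

Theorem lemma3 (R : realFieldType) (q : bool * bool -> R) :
  is_prob q ->
  let q00 := q (false, false) in let q01 := q (false, true) in
  let q10 := q (true, false) in let q11 := q (true, true) in
  let q1p := q10 + q11 in let qp1 := q01 + q11 in
  (exists Pr Sp1 Se1 Sp2 Se2 : R, inA q Pr Sp1 Se1 Sp2 Se2) /\
  (forall Pr Sp1 Se1 Sp2 Se2 : R,
     inA q Pr Sp1 Se1 Sp2 Se2 <->
     [/\ in01 Pr, in01 Sp1, in01 Se1, in01 Sp2 & in01 Se2] /\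
     [/\ (1 - Pr) * (1 - Sp1) + Pr * Se1 = q1p,
         (1 - Pr) * (1 - Sp2) + Pr * Se2 = qp1,
         (1 - Pr) * Num.min Sp1 Sp2 + Pr * (1 - Num.max Se1 Se2) >= q00 &
         (1 - Pr) * pos_part (Sp1 + Sp2 - 1) + Pr * pos_part (1 - Se1 - Se2) <= q00]) /\
  (forall Pr Sp1 Se1 Sp2 Se2 : R,
     inA q Pr Sp1 Se1 Sp2 Se2 <->
     [/\ in01 Pr, in01 Sp1, in01 Se1, in01 Sp2 & in01 Se2] /\
     [/\ Pr * (Se2 - Se1) = (1 - Pr) * (Sp2 - Sp1) + q01 - q10,
         Pr * (Se1 + Se2 - 1) = (1 - Pr) * (Sp1 + Sp2 - 1) + q11 - q00,
         - q10 <= Pr * (Se2 - Se1) <= q01 &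
         - q00 <= Pr * (Se1 + Se2 - 1) <= q11]).
Proof.
move=> [hq0 hqs] /=.
have hs : q (false,false) + q (false,true) + q (true,false) + q (true,true) = 1
  by rewrite -hqs sum4.
split.
  pose chi := fun (_ : bool) (j : bool * bool) => q j.
  exists 0, (chi1 chi false false), (chi1 chi true true),
         (chi2 chi false false), (chi2 chi true true).
  exists (fun b : bool => if b then 0 else 1), chi.
  split; first (split; first by case => /=; lra).
    by rewrite big_bool /=; lra.
  split; first by move=> x; split.
  split; last by [].
  by move=> j; rewrite /mu big_bool /chi /=; lra.
split=> P Sp1 Se1 Sp2 Se2; split.
- move=> hA; have [hin hE] := L1 _ _ _ _ _ _ _ hA; split => //.
  by apply/(L3 _ _ _ _ _ _ _ hs hq0 hin).
- by move=> [hin hC]; apply: L2.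
- exact: L1.
- move=> [hin hE]; apply: L2 => //.
  by apply/(L3 _ _ _ _ _ _ _ hs hq0 hin).
Qed.
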